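(* Let $P=(A_1,\dots,A_n)$ be a cyclic $n$-gon (distinct vertices on a circle) with vertices ordered anticlockwise, and take all indices modulo $n$ in $\{1,\dots,n\}$. Let $m$ be an integer with $2\le m\le n-1$, and let $q,r\in\{1,\dots,n\}$ be such that $q,q+1,\dots,q+m-2,r,r+1$ are pairwise distinct. Write $I=\{q,q+1,\dots,q+m-2\}$. Then \[ S_{q,r,r+1}\prod_{k=q+1}^{q+m-2} x_{k,r+1} = \sum_{t=0}^{m-3} S_{q+t,\,q+t+1,\,r+1}\; x_{r,r+1}\!\!\prod_{k\in I\setminus\{q+t,q+t+1\}}\!\! x_{k,r+1} \;+\; S_{q+m-2,\,r,\,r+1}\prod_{k=q}^{q+m-3} x_{k,r+1}. \]
   Context: For points $A_p=(x_p,y_p)$, $x_{pq}:=(x_q-x_p)^2+(y_q-y_p)^2$ is the squared distance between $A_p$ and $A_q$, and $S_{pqr}:=2[(x_q-x_p)(y_r-y_p)-(y_q-y_p)(x_r-x_p)]$ is four times the signed area of triangle $A_pA_qA_r$; these are the entries of the polygonal Heronian frieze of $P$. Empty sums equal $0$ and empty products equal $1$. *)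

(* Defs.v *)
From mathcomp Require Import all_boot all_order all_algebra.
From mathcomp Require Import all_classical all_reals all_analysis.
Set Implicit Arguments. Unset Strict Implicit. Unset Printing Implicit Defensive.
Import Order.TTheory GRing.Theory Num.Theory.
Local Open Scope ring_scope.

Definition sqdist {R : realType} (p q : R * R) : R :=
  (q.1 - p.1) ^+ 2 + (q.2 - p.2) ^+ 2.

(* four times the signed area of the triangle p q r *)
Definition S4 {R : realType} (p q r : R * R) : R :=
  2 * ((q.1 - p.1) * (r.2 - p.2) - (q.2 - p.2) * (r.1 - p.1)).

(* The polygon vertices A_1..A_n are stored 0-based as A 0, ..., A (n-1);
   an index k : nat denotes the vertex A (k %% n)%N (indices modulo n). *)
Definition xx {R : realType} (n : nat) (A : nat -> R * R) (k l : nat) : R :=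
  sqdist (A ((k %% n)%N)) (A ((l %% n)%N)).

Definition SS {R : realType} (n : nat) (A : nat -> R * R) (k l j : nat) : R :=
  S4 (A ((k %% n)%N)) (A ((l %% n)%N)) (A (j %% n)%N).

Definition cyclic_anticlockwise {R : realType} (n : nat) (A : nat -> R * R) : Prop :=
  exists (c : R * R) (rho : R) (th : nat -> R),
    0 < rho /\
    (forall i j, (i < j < n)%N -> th i < th j) /\
    th n.-1 < th 0%N + 2 * pi /\
    (forall i, (i < n)%N ->
        A i = (c.1 + rho * cos (th i), c.2 + rho * sin (th i))).

(* Main.v *)
Require Import Defs.
From mathcomp Require Import all_boot all_order all_algebra.
From mathcomp Require Import all_classical all_reals all_analysis.
Import Order.TTheory GRing.Theory Num.Theory.
Local Open Scope ring_scope.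

From mathcomp Require Import ring zify lra.
Lemma three (R : realType) (c P Q Y W : R * R) (s : R) :
  (P.1 - c.1)^+2 + (P.2 - c.2)^+2 = s ->
  (Q.1 - c.1)^+2 + (Q.2 - c.2)^+2 = s ->
  (Y.1 - c.1)^+2 + (Y.2 - c.2)^+2 = s ->
  (W.1 - c.1)^+2 + (W.2 - c.2)^+2 = s ->
  S4 P Y W * sqdist Q W = S4 P Q W * sqdist Y W + S4 Q Y W * sqdist P W.
Proof.
case: P => p1 p2; case: Q => q1 q2; case: Y => y1 y2; case: W => w1 w2.
case: c => c1 c2 /= hP hQ hY hW.
have key : 2 * ((y1 - p1) * (w2 - p2) - (y2 - p2) * (w1 - p1)) * ((q1 - w1) ^+ 2 + (q2 - w2) ^+ 2) -
  2 * ((q1 - p1) * (w2 - p2) - (q2 - p2) * (w1 - p1)) * ((y1 - w1) ^+ 2 + (y2 - w2) ^+ 2) -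
  2 * ((y1 - q1) * (w2 - q2) - (y2 - q2) * (w1 - q1)) * ((p1 - w1) ^+ 2 + (p2 - w2) ^+ 2)
  = - 2 * ((p1 - w1) * (q2 - w2) - (p2 - w2) * (q1 - w1)) * (((y1 - c1)^+2 + (y2 - c2)^+2) - ((w1 - c1)^+2 + (w2 - c2)^+2))
  - 2 * ((q1 - w1) * (y2 - w2) - (q2 - w2) * (y1 - w1)) * (((p1 - c1)^+2 + (p2 - c2)^+2) - ((w1 - c1)^+2 + (w2 - c2)^+2))
  + 2 * ((p1 - w1) * (y2 - w2) - (p2 - w2) * (y1 - w1)) * (((q1 - c1)^+2 + (q2 - c2)^+2) - ((w1 - c1)^+2 + (w2 - c2)^+2)).
  ring.
rewrite hP hQ hY hW subrr !mulr0 ?oppr0 ?subr0 ?addr0 in key.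
rewrite /S4 /sqdist /=; apply/eqP; rewrite -subr_eq0; apply/eqP.
rewrite -[RHS]key; ring.
Qed.

Lemma main_ind (R : comRingType) (S : nat -> nat -> R) (T x : nat -> R) (xr : R) q :
 (forall a b, T a * x b = S a b * xr + T b * x a) ->
 forall j, T q * \prod_(q.+1 <= k < q + j.+1) x k =
   \sum_(0 <= t < j) S (q+t)%N (q+t).+1 * xr *
       \prod_(q <= k < q + j.+1 | (k != q+t)%N && (k != (q+t).+1)%N) x k
   + T (q+j)%N * \prod_(q <= k < q + j) x k.
Proof.
move=> H3; elim=> [|j IH].
  by rewrite !big_geq ?addn0 ?addn1 // add0r.
rewrite addnS big_nat_recr /=; last by lia.
rewrite -addnS mulrA IH big_nat_recr //= mulrDl big_distrl /=.
have E1 : forall t, (t < j)%N ->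
   \prod_(q <= k < (q + j.+1).+1 | (k != q+t)%N && (k != (q+t).+1)%N) x k =
   \prod_(q <= k < q + j.+1 | (k != q+t)%N && (k != (q+t).+1)%N) x k * x (q + j.+1)%N.
  move=> t ht; rewrite big_mkcond [in RHS]big_mkcond /= big_nat_recr /=;
    last by lia.
  congr (_ * _); case: ifP => // /negP []; apply/andP; split; apply/eqP; lia.
rewrite [X in _ = X + _](_ : _ = \sum_(0 <= t < j) (S (q + t)%N (q + t).+1 * xr *
       \prod_(q <= k < q + j.+1 | (k != q + t)%N && (k != (q + t).+1)%N) x k * x (q + j.+1)%N)
       + S (q + j)%N (q + j).+1 * xr * \prod_(q <= k < q + j) x k); last first.
  congr (_ + _).
    apply: eq_big_nat => t /andP [_ ht]; by rewrite (addnS q j.+1) E1 // mulrA.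
  congr (_ * _); rewrite big_mkcond /= addnS big_nat_recr /=; last by lia.
  rewrite addnS big_nat_recr /=; last by lia.
  rewrite !eqxx /= ?andbF !mulr1 big_mkcond.
  apply: eq_big_nat => k /andP [_ hk]; case: ifP => // /negP []; apply/andP; split; apply/eqP; lia.
rewrite -addrA; congr (_ + _).
rewrite -addnS -mulrA [X in _ * X]mulrC mulrA H3 mulrDl addnS big_nat_recr /=; last by lia.
rewrite -addnS; ring.
Qed.

Theorem corollary2p10 (R : realType) (n : nat) (A : nat -> R * R)
    (m q r : nat) :
  cyclic_anticlockwise n A ->
  (2 <= m)%N -> (m <= n.-1)%N ->
  (q < n)%N -> (r < n)%N ->
  uniq [seq (i %% n)%N | i <- iota q m.-1 ++ [:: r; r.+1]] ->
  SS n A q r r.+1 * \prod_(q.+1 <= k < q + m.-1) xx n A k r.+1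
  = \sum_(0 <= t < m - 2)
       SS n A (q + t) (q + t).+1 r.+1 * xx n A r r.+1 *
       \prod_(q <= k < q + m.-1 | (k != q + t)%N && (k != (q + t).+1)%N)
          xx n A k r.+1
    + SS n A (q + m - 2) r r.+1 * \prod_(q <= k < q + m - 2) xx n A k r.+1.
Proof.
move=> [c [rho [th [_ [_ [_ hA]]]]]] hm hmn hq hr _.
have n0 : (0 < n)%N by lia.
have circ : forall k, ((A (k %% n)%N).1 - c.1)^+2 + ((A (k %% n)%N).2 - c.2)^+2 = rho ^+ 2.
  move=> k; have e : forall a b : R, a + b - a = b by move=> *; ring.
  by rewrite hA ?ltn_pmod //= !e !exprMn -mulrDr cos2Dsin2 mulr1.
have H3 : forall a b, SS n A a r r.+1 * xx n A b r.+1 =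
   SS n A a b r.+1 * xx n A r r.+1 + SS n A b r r.+1 * xx n A a r.+1.
  by move=> a b; rewrite /SS /xx; exact: (@three _ c _ _ _ _ _ (circ a) (circ b) (circ r) (circ r.+1)).
have := @main_ind R (fun a b => SS n A a b r.+1) (fun a => SS n A a r r.+1) (fun k => xx n A k r.+1) (xx n A r r.+1) q H3 (m - 2).
have -> : (m - 2).+1 = m.-1 by lia.
have -> : (q + (m - 2) = q + m - 2)%N by lia.
move=> H; exact: H.
Qed.
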